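(* Let $(X,d,\theta)$ be a $\theta$-metric space, where $\theta$ is a $B$-action. Then the topological space $(X,\tau_d)$ is metrizable, i.e. there is a metric on $X$ whose metric topology equals $\tau_d$.
   Context: A $B$-action is a map $\theta:[0,\infty)\times[0,\infty)\to[0,\infty)$ that is continuous in each variable separately and satisfies: (i) $\theta(0,0)=0$ and $\theta(s,t)=\theta(t,s)$ for all $s,t\ge0$; (ii) $\theta(x,y)<\theta(s,t)$ whenever either $x\le s,\ y<t$ or $x<s,\ y\le t$; (iii) for each $m\in\mathrm{Im}(\theta)=\{\theta(s,t):s,t\ge0\}$ and each $t\in[0,m]$ there is $s\in[0,m]$ with $\theta(s,t)=m$; (iv) $\theta(s,0)\le s$ for all $s>0$. A $\theta$-metric on a non-empty set $X$ with respect to a $B$-action $\theta$ is a map $d:X\times X\to[0,\infty)$ such that for all $x,y,z\in X$: $d(x,y)=0$ iff $x=y$; $d(x,y)=d(y,x)$; $d(x,z)\le\theta(d(x,y),d(y,z))$. The topology $\tau_d$ consists of all $U\subseteq X$ such that for every $x\in U$ there is $r>0$ with $\{y\in X: d(x,y)<r\}\subseteq U$. *)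

(* Defs.v *)
From Stdlib Require Import Reals.
Open Scope R_scope.

(* A B-action theta : [0,oo) x [0,oo) -> [0,oo), represented as a total
   function R -> R -> R whose behaviour is only constrained on [0,oo)^2. *)
Definition B_action (theta : R -> R -> R) : Prop :=
  (forall s t, 0 <= s -> 0 <= t -> 0 <= theta s t) /\
  (forall t s0, 0 <= t -> 0 <= s0 -> forall eps, 0 < eps ->
     exists delta, 0 < delta /\ forall s, 0 <= s -> Rabs (s - s0) < delta ->
       Rabs (theta s t - theta s0 t) < eps) /\
  (forall s t0, 0 <= s -> 0 <= t0 -> forall eps, 0 < eps ->
     exists delta, 0 < delta /\ forall t, 0 <= t -> Rabs (t - t0) < delta ->
       Rabs (theta s t - theta s t0) < eps) /\
  theta 0 0 = 0 /\
  (forall s t, 0 <= s -> 0 <= t -> theta s t = theta t s) /\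
  (forall x y s t, 0 <= x -> 0 <= y -> 0 <= s -> 0 <= t ->
     ((x <= s /\ y < t) \/ (x < s /\ y <= t)) -> theta x y < theta s t) /\
  (forall m, (exists s t, 0 <= s /\ 0 <= t /\ theta s t = m) ->
     forall t, 0 <= t -> t <= m ->
       exists s, 0 <= s /\ s <= m /\ theta s t = m) /\
  (forall s, 0 < s -> theta s 0 <= s).

Definition theta_metric {X : Type} (theta : R -> R -> R) (d : X -> X -> R) : Prop :=
  (forall x y, 0 <= d x y) /\
  (forall x y, d x y = 0 <-> x = y) /\
  (forall x y, d x y = d y x) /\
  (forall x y z, d x z <= theta (d x y) (d y z)).

Definition tau {X : Type} (d : X -> X -> R) (U : X -> Prop) : Prop :=
  forall x, U x -> exists r, 0 < r /\ forall y, d x y < r -> U y.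

Definition is_metric {X : Type} (m : X -> X -> R) : Prop :=
  (forall x y, 0 <= m x y) /\
  (forall x y, m x y = 0 <-> x = y) /\
  (forall x y, m x y = m y x) /\
  (forall x y z, m x z <= m x y + m y z).

(* Main.v *)
Require Import Defs.
From Stdlib Require Import Reals Lra Lia Classical IndefiniteDescription.
Open Scope R_scope.

Definition hp (n : nat) : R := (/2)^n.

Lemma hp_pos n : 0 < hp n.
Proof. unfold hp; apply pow_lt; lra. Qed.

Lemma hp_S n : hp (S n) = hp n / 2.
Proof. unfold hp; simpl; lra. Qed.

Lemma hp_le1 n : hp n <= 1.
Proof. induction n. unfold hp; simpl; lra. rewrite hp_S. pose proof (hp_pos n). lra. Qed.

Lemma hp_mono k t : hp (k + t) <= hp k.
Proof. induction t. rewrite Nat.add_0_r; lra.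
  rewrite Nat.add_succ_r, hp_S. pose proof (hp_pos (k+t)). lra. Qed.

Lemma hp_small e : 0 < e -> exists k, hp k < e.
Proof. intros He. destruct (pow_lt_1_zero (/2)) with (y := e) as [N HN]; auto.
  rewrite Rabs_pos_eq; lra.
  exists N. specialize (HN N (le_n N)). rewrite Rabs_pos_eq in HN. exact HN.
  left; apply hp_pos. Qed.

Definition good {X} (d : X -> X -> R) (r : nat -> R) : Prop :=
  (forall x y, 0 <= d x y) /\ (forall x y, d x y = 0 <-> x = y) /\
  (forall x y, d x y = d y x) /\ (forall n, 0 < r n) /\
  (forall n, r (S n) <= r n / 2) /\
  (forall n x y z w, d x y < r (S n) -> d y z < r (S n) -> d z w < r (S n) -> d x w < r n).

Definition Bd {X} (d : X -> X -> R) (r : nat -> R) x y c : Prop :=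
  forall k, c < hp k -> d x y < r k.

Inductive ChainN {X} (d : X -> X -> R) (r : nat -> R) : nat -> X -> X -> R -> Prop :=
| ch0 : forall x, ChainN d r 0 x x 0
| chS : forall n x y z c s, Bd d r x y c -> 0 <= c -> ChainN d r n y z s ->
    ChainN d r (S n) x z (c + s).

Lemma chain_nonneg {X} d r n (x y : X) s : ChainN d r n x y s -> 0 <= s.
Proof. induction 1; lra. Qed.

Lemma chain_app {X} d r n (x y : X) s1 : ChainN d r n x y s1 ->
  forall k z s2, ChainN d r k y z s2 -> ChainN d r (n + k) x z (s1 + s2).
Proof. induction 1; intros k w s2 H2.
  - simpl. replace (0 + s2) with s2 by ring. exact H2.
  - simpl. replace (c + s + s2) with (c + (s + s2)) by ring. econstructor; eauto.
Qed.

Lemma Bd_sym {X} d r (x y : X) c : (forall x y, d x y = d y x) -> Bd d r x y c -> Bd d r y x c.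
Proof. intros Hs H k Hk. rewrite Hs; auto. Qed.

Lemma chain_rev {X} d r n (x y : X) s : (forall x y, d x y = d y x) ->
  ChainN d r n x y s -> exists n', ChainN d r n' y x s.
Proof. intros Hs. induction 1.
  - exists 0%nat; constructor.
  - destruct IHChainN as [n' Hn']. exists (n' + 1)%nat.
    replace (c + s) with (s + (c + 0)) by ring. eapply chain_app; [exact Hn'|].
    apply chS with (y := x); [apply Bd_sym; auto | exact H0 | constructor].
Qed.

Lemma chain_split {X} d r n (x z : X) s : ChainN d r n x z s ->
  forall h, 0 <= h -> h < s ->
  exists k1 k2 y y' a c b, ChainN d r k1 x y a /\ Bd d r y y' c /\ 0 <= c /\
    ChainN d r k2 y' z b /\ a <= h /\ h < a + c /\ s = a + c + b /\ n = S (k1 + k2).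
Proof. induction 1; intros h Hh0 Hh1.
  - lra.
  - destruct (Rlt_le_dec h c).
    + exists 0%nat, n, x, y, 0, c, s. repeat split; auto; try constructor; try lra.
    + destruct (IHChainN (h - c)) as (k1 & k2 & y1 & y1' & a & c' & b & Ha & Hb & Hc' & Hr & Hah & Hac & Hs & Hn);
        try lra.
      exists (S k1), k2, y1, y1', (c + a), c', b. repeat split; auto; try lra; try lia.
      econstructor; eauto.
Qed.

Lemma chain_zero {X} d r n (x z : X) s : good d r -> ChainN d r n x z s -> s = 0 ->
  forall k, d x z < r k.
Proof. intros (Hnn & Hid & Hs & Hr & Hr2 & Htri). induction 1; intros Hz k.
  - assert (d x x = 0) by (apply Hid; auto). rewrite H. apply Hr.
  - pose proof (chain_nonneg _ _ _ _ _ _ H1).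
    apply (Htri k x y z z).
    + apply H. pose proof (hp_pos (S k)). lra.
    + apply IHChainN. lra.
    + assert (d z z = 0) by (apply Hid; auto). rewrite H3. apply Hr.
Qed.

Lemma chain_main {X} d r (Hg : good d r) : forall N n (x z : X) s, (n <= N)%nat ->
  ChainN d r n x z s -> Bd d r x z (2 * s).
Proof. induction N; intros n x z s Hn Hc.
  - inversion Hc; subst; try lia. intros k _. destruct Hg as (Hnn & Hid & _ & Hr & _).
    assert (d z z = 0) by (apply Hid; auto). rewrite H. apply Hr.
  - pose proof (chain_nonneg _ _ _ _ _ _ Hc).
    destruct (Req_dec s 0) as [Hs0 | Hs0].
    + intros k _. eapply chain_zero; eauto.
    + destruct (chain_split _ _ _ _ _ _ Hc (s/2)) as
        (k1 & k2 & y & y' & a & c & b & Ha & Hb & Hc' & Hr & Hah & Hac & Hs & Hneq); try lra.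
      assert (IH1 := IHN k1 x y a ltac:(lia) Ha).
      assert (IH2 := IHN k2 y' z b ltac:(lia) Hr).
      pose proof (chain_nonneg _ _ _ _ _ _ Ha). pose proof (chain_nonneg _ _ _ _ _ _ Hr).
      intros k Hk. destruct Hg as (_ & _ & _ & _ & _ & Htri).
      pose proof (hp_S k).
      apply (Htri k x y y' z).
      * apply IH1; lra.
      * apply Hb; lra.
      * apply IH2; lra.
Qed.

Definition E {X} d r (x y : X) : R -> Prop := fun v => exists n s, ChainN d r n x y s /\ v = - s.

Lemma E_bound {X} d r (x y : X) : bound (E d r x y).
Proof. exists 0. intros v (n & s & Hc & ->). pose proof (chain_nonneg _ _ _ _ _ _ Hc). lra. Qed.

Lemma Bd_one {X} d r (x y : X) : Bd d r x y 1.
Proof. intros k Hk. pose proof (hp_le1 k). lra. Qed.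

Lemma E_ne {X} d r (x y : X) : exists v, E d r x y v.
Proof. exists (- (1 + 0)). exists 1%nat, (1+0). split; auto.
  econstructor. apply Bd_one. lra. constructor. Qed.

Definition M {X} d r (x y : X) : R := - proj1_sig (completeness _ (E_bound d r x y) (E_ne d r x y)).

Lemma M_le {X} d r n (x y : X) s : ChainN d r n x y s -> M d r x y <= s.
Proof. intros Hc. unfold M. destruct completeness as [l [Hl1 Hl2]]. simpl.
  assert (- s <= l) by (apply Hl1; exists n, s; auto). lra. Qed.

Lemma M_nonneg {X} d r (x y : X) : 0 <= M d r x y.
Proof. unfold M. destruct completeness as [l [Hl1 Hl2]]. simpl.
  assert (l <= 0). apply Hl2. intros v (n & s & Hc & ->). pose proof (chain_nonneg _ _ _ _ _ _ Hc). lra.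
  lra. Qed.

Lemma M_approx {X} d r (x y : X) eps : 0 < eps ->
  exists n s, ChainN d r n x y s /\ s < M d r x y + eps.
Proof. intros He. destruct (classic (exists n s, ChainN d r n x y s /\ s < M d r x y + eps)) as [H|H]; auto.
  exfalso. unfold M in H. destruct completeness as [l [Hl1 Hl2]]. simpl in H.
  assert (l <= l - eps); [|lra]. apply Hl2. intros v (n & s & Hc & ->).
  destruct (Rle_lt_dec (-s) (l - eps)); auto. exfalso. apply H. exists n, s. split; auto. lra.
Qed.

Lemma theta_small theta : B_action theta -> forall eps, 0 < eps -> exists delta, 0 < delta /\
  forall a b, 0 <= a -> 0 <= b -> a < delta -> b < delta -> theta a b < eps.
Proof. intros (Hnn & Hc1 & Hc2 & H00 & Hsym & Hmono & _) eps He.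
  destruct (Hc2 0 0 (Rle_refl 0) (Rle_refl 0) eps He) as [d0 [Hd0 Hd0']].
  set (t0 := d0 / 2).
  assert (Ht0 : theta 0 t0 < eps).
  { assert (H := Hd0' t0 ltac:(unfold t0; lra) ltac:(rewrite Rminus_0_r, Rabs_pos_eq; unfold t0; lra)).
    rewrite H00, Rminus_0_r in H. pose proof (Rle_abs (theta 0 t0)). lra. }
  destruct (Hc1 t0 0 ltac:(unfold t0; lra) (Rle_refl 0) (eps - theta 0 t0) ltac:(lra)) as [d1 [Hd1 Hd1']].
  exists (Rmin d1 t0). split. apply Rmin_glb_lt; unfold t0; lra.
  intros a b Ha Hb Ha' Hb'.
  pose proof (Rmin_l d1 t0). pose proof (Rmin_r d1 t0).
  assert (H1 : theta a b < theta a t0).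
  { apply Hmono; auto; unfold t0 in *; try lra. }
  assert (H2 := Hd1' a Ha ltac:(rewrite Rminus_0_r, Rabs_pos_eq; lra)).
  pose proof (Rle_abs (theta a t0 - theta 0 t0)). lra.
Qed.

Lemma tri_exists {X} theta (d : X -> X -> R) : B_action theta -> theta_metric theta d ->
  forall eps, exists delta, 0 < eps -> 0 < delta /\
   forall x y z w, d x y < delta -> d y z < delta -> d z w < delta -> d x w < eps.
Proof. intros Hth (Hnn & Hid & Hs & Ht) eps.
  destruct (Rlt_le_dec 0 eps) as [He|He]; [|exists 0; intros; lra].
  destruct (theta_small theta Hth eps He) as [d1 [Hd1 H1]].
  destruct (theta_small theta Hth d1 Hd1) as [d2 [Hd2 H2]].
  exists (Rmin d1 d2). intros _. split. apply Rmin_glb_lt; lra.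
  intros x y z w Hxy Hyz Hzw. pose proof (Rmin_l d1 d2). pose proof (Rmin_r d1 d2).
  assert (d x z < d1). { eapply Rle_lt_trans. apply (Ht x y z). apply H2; auto; lra. }
  eapply Rle_lt_trans. apply (Ht x z w). apply H1; auto; lra.
Qed.

Theorem mainTheorem6 (X : Type) (theta : R -> R -> R) (d : X -> X -> R)
  (HX : inhabited X) (Htheta : B_action theta) (Hd : theta_metric theta d) :
  exists m : X -> X -> R, is_metric m /\ (forall U : X -> Prop, tau m U <-> tau d U).
Proof.
  pose proof (tri_exists theta d Htheta Hd) as Hst.
  set (st := fun eps => proj1_sig (constructive_indefinite_description _ (Hst eps))).
  assert (Hstp : forall eps, 0 < eps -> 0 < st eps /\
   forall x y z w, d x y < st eps -> d y z < st eps -> d z w < st eps -> d x w < eps).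
  { intros eps He. unfold st. destruct constructive_indefinite_description as [v Hv]. simpl. auto. }
  set (r := fix r (n : nat) : R := match n with O => 1 | S k => Rmin (st (r k)) (r k / 2) end).
  assert (Hrpos : forall n, 0 < r n).
  { induction n. simpl; lra. simpl. fold r. destruct (Hstp _ IHn). apply Rmin_glb_lt; lra. }
  assert (Hr2 : forall n, r (S n) <= r n / 2). { intros n. simpl. fold r. apply Rmin_r. }
  assert (Hrhp : forall n, r n <= hp n).
  { induction n. simpl. unfold hp; simpl; lra. rewrite hp_S. specialize (Hr2 n). lra. }
  assert (Hrmono : forall k t, r (k + t)%nat <= r k).
  { intros k t. induction t. rewrite Nat.add_0_r; lra. rewrite Nat.add_succ_r.
    specialize (Hr2 (k+t)%nat). specialize (Hrpos (k+t)%nat). lra. }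
  destruct Hd as (Hnn & Hid & Hs & Ht).
  assert (Hg : good d r).
  { repeat split; auto. apply Hid. apply Hid. intros n x y z w H1 H2 H3.
    destruct (Hstp (r n) (Hrpos n)) as [_ Hp]. pose proof (Rmin_l (st (r n)) (r n / 2)).
    simpl in H1, H2, H3. fold r in H1, H2, H3. apply (Hp x y z w); lra. }
  assert (Hdm : forall k x y, d x y < r k -> M d r x y <= hp k).
  { intros k x y Hxy. replace (hp k) with (hp k + 0) by ring. apply (M_le d r 1).
    econstructor; [| left; apply hp_pos | constructor].
    intros j Hj. destruct (Compare_dec.le_lt_dec k j) as [Hkj|Hkj].
    - exfalso. pose proof (hp_mono k (j - k)). replace (k + (j - k))%nat with j in H by lia. lra.
    - pose proof (Hrmono j (k - j)%nat). replace (j + (k - j))%nat with k in H by lia. lra. }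
  assert (Hmd : forall k x y, M d r x y < hp (S k) -> d x y < r k).
  { intros k x y Hm. destruct (M_approx d r x y (hp (S k) - M d r x y)) as (n & s & Hc & Hsl); try lra.
    apply (chain_main d r Hg n n x y s (le_n n) Hc). rewrite hp_S in Hsl. lra. }
  exists (M d r). split.
  - split; [| split; [| split]].
    + apply M_nonneg.
    + intros x y; split; intros H.
      * apply Hid. destruct (Rle_lt_dec (d x y) 0) as [H1|H1]. pose proof (Hnn x y); lra.
        exfalso. destruct (hp_small (d x y) H1) as [k Hk].
        assert (d x y < r k). apply Hmd. rewrite H. apply hp_pos.
        specialize (Hrhp k). lra.
      * subst. apply Rle_antisym; [| apply M_nonneg]. apply (M_le d r 0). constructor.
    + intros x y. apply Rle_antisym.
      * apply Rle_plus_epsilon. intros eps He. destruct (M_approx d r y x eps He) as (n & s & Hc & Hsl).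
        destruct (chain_rev d r n y x s Hs Hc) as [n' Hn']. pose proof (M_le _ _ _ _ _ _ Hn'). lra.
      * apply Rle_plus_epsilon. intros eps He. destruct (M_approx d r x y eps He) as (n & s & Hc & Hsl).
        destruct (chain_rev d r n x y s Hs Hc) as [n' Hn']. pose proof (M_le _ _ _ _ _ _ Hn'). lra.
    + intros x y z. apply Rle_plus_epsilon. intros eps He.
      destruct (M_approx d r x y (eps/2)) as (n1 & s1 & Hc1 & Hs1); try lra.
      destruct (M_approx d r y z (eps/2)) as (n2 & s2 & Hc2 & Hs2); try lra.
      pose proof (M_le _ _ _ _ _ _ (chain_app d r n1 x y s1 Hc1 n2 z s2 Hc2)). lra.
  - intros U; split; intros HU x Hx.
    + destruct (HU x Hx) as [e [He HUe]]. destruct (hp_small e He) as [k Hk].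
      exists (r k). split; auto. intros y Hy. apply HUe. pose proof (Hdm k x y Hy). lra.
    + destruct (HU x Hx) as [e [He HUe]]. destruct (hp_small e He) as [k Hk].
      exists (hp (S k)). split. apply hp_pos. intros y Hy. apply HUe.
      pose proof (Hmd k x y Hy). pose proof (Hrhp k). lra.
Qed.
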